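(* Let $F_1$ and $F_2$ be finite fields with $|F_1|\le |F_2|$. Then there exists an $|F_1|\times|F_2|$ Latin-sum array (with $A=F_1$, $B=F_2$) over an alphabet $C$ with $$|C|=\begin{cases}4, & F_1=F_2=\mathbb{Z}_3,\\ |F_2|, & \text{otherwise}.\end{cases}$$
   Context: Let $F_1,F_2$ be finite fields with $|F_1|\le|F_2|$, and let $A\subseteq F_1$, $B\subseteq F_2$ with $|A|\le|B|$. A table $L$ of size $|A|\times|B|$ with entries from a set $C$, whose rows are indexed by the elements of $A$ and columns by the elements of $B$ (entry $L_{x,y}$ for $x\in A,y\in B$), is called a Latin-sum array over $C$ if for every two distinct pairs $(x_1,y_1),(x_2,y_2)\in A\times B$: (i) if $x_1+x_2=0$ in $F_1$ then $L_{x_1,y_1}\ne L_{x_2,y_2}$; and (ii) if $y_1+y_2=0$ in $F_2$ then $L_{x_1,y_1}\ne L_{x_2,y_2}$. *)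

(* Defs.v *)
From HB Require Import structures.
From mathcomp Require Import all_boot all_order all_algebra.
Set Implicit Arguments. Unset Strict Implicit. Unset Printing Implicit Defensive.
Import GRing.Theory.
Local Open Scope ring_scope.

Definition latin_sum (F1 F2 : finFieldType) (C : eqType)
    (A : {set F1}) (B : {set F2}) (L : F1 -> F2 -> C) : Prop :=
  forall x1 y1 x2 y2,
    x1 \in A -> y1 \in B -> x2 \in A -> y2 \in B ->
    (x1, y1) != (x2, y2) ->
    (x1 + x2 == 0 -> L x1 y1 != L x2 y2) /\
    (y1 + y2 == 0 -> L x1 y1 != L x2 y2).

(* Main.v *)
Require Import Defs.
From HB Require Import structures.
From mathcomp Require Import all_boot all_order all_algebra.
From mathcomp Require Import zify.
Set Implicit Arguments. Unset Strict Implicit. Unset Printing Implicit Defensive.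
Import GRing.Theory.

Definition rk {T : finType} (x : T) : nat := enum_rank x.
Definition posi {T : finType} (s : T -> T) (x : T) : bool := rk x < rk (s x).

Lemma rk_inj (T : finType) : injective (@rk T).
Proof. by move=> x y /val_inj /enum_rank_inj. Qed.

Lemma rk_lt (T : finType) (x : T) : rk x < #|T|.
Proof. by rewrite /rk. Qed.

Lemma sum_bool (T : finType) (P : pred T) : (\sum_(x : T) (P x : nat))%N = #|P|.
Proof. by rewrite -sum1_card [RHS]big_mkcond; apply: eq_bigr => i _; rewrite unfold_in; by case: (P i). Qed.

Lemma inv_card (T : finType) (s : T -> T) : involutive s ->
  #|T| = (#|[pred x | s x == x]| + 2 * #|[pred x | posi s x]|)%N.
Proof.
move=> sK; have sinj : injective s := inv_inj sK.
have E : forall x, 1%N = ((s x == x) : nat) + posi s x + posi s (s x).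
  move=> x; rewrite /posi sK; case: eqP => [->|ne]; first by rewrite ltnn.
  have : rk x != rk (s x) by apply/eqP => /rk_inj h; apply: ne.
  by case: ltngtP.
have -> : #|T| = (\sum_(x : T) 1)%N by rewrite -(sum_bool predT).
rewrite (eq_bigr _ (fun x _ => E x)) !big_split /= !sum_bool.
have H : #|(fun x => posi s (s x))| = #|posi s|.
  by rewrite -!sum_bool [RHS](reindex_inj sinj).
rewrite H mul2n -addnn addnA; congr (_ + _ + _); apply: eq_card => x; by rewrite inE.
Qed.

Local Open Scope ring_scope.

Lemma xx2 (F : finFieldType) (x : F) : x + x = x * 2%:R.
Proof. by rewrite mulr_natr mulr2n. Qed.

Lemma c2_opp (F : finFieldType) (x : F) : (2%:R : F) == 0 -> - x = x.
Proof.
move=> /eqP h2; apply/eqP; rewrite eqr_oppLR; apply/eqP.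
by apply/eqP; rewrite -addr_eq0 xx2 h2 mulr0.
Qed.

Lemma c2_sum (F : finFieldType) (x y : F) : (2%:R : F) == 0 -> x + y == 0 -> x = y.
Proof. by move=> h2; rewrite addr_eq0 c2_opp // => /eqP. Qed.

Lemma c2_even (F : finFieldType) : (2%:R : F) == 0 -> ~~ odd #|F|.
Proof.
move=> /eqP h2.
have sK : involutive (fun x : F => x + 1).
  by move=> x /=; rewrite -addrA xx2 mul1r h2 addr0.
rewrite (inv_card sK).
have -> : #|[pred x : F | x + 1 == x]| = 0%N.
  apply: eq_card0 => x; rewrite inE -subr_eq0 addrAC subrr add0r.
  by rewrite oner_eq0.
by rewrite add0n mul2n odd_double.
Qed.

Lemma od_opp0 (F : finFieldType) (x : F) : (2%:R : F) != 0 -> (- x == x) = (x == 0).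
Proof.
move=> h2; apply/idP/idP => [|/eqP->]; last by rewrite oppr0.
rewrite eqr_oppLR -addr_eq0 xx2 mulf_eq0 (negbTE h2) orbF //.
Qed.

Lemma od_sum (F : finFieldType) (x y : F) : x + y == 0 -> y = - x.
Proof. by rewrite addrC addr_eq0 => /eqP. Qed.

Definition pos (F : finFieldType) (x : F) := posi (fun z : F => - z) x.
Definition Pset (F : finFieldType) : {set F} := [set z | pos z].
Definition ab (F : finFieldType) (x : F) := if pos x then x else - x.
Definition ix (F : finFieldType) (x : F) : nat := index (ab x) (enum (Pset F)).
Definition hh (F : finFieldType) : nat := #|Pset F|.
Definition slot (F : finFieldType) (x : F) : nat := if pos x then ix x else (hh F + ix x)%N.

Lemma od_card (F : finFieldType) : (2%:R : F) != 0 -> #|F| = (2 * hh F).+1.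
Proof.
move=> h2; have sK : involutive (fun x : F => - x) by move=> x; rewrite opprK.
rewrite (inv_card sK).
have -> : #|[pred x : F | - x == x]| = 1%N.
  rewrite -(card1 (0 : F)); apply: eq_card => x; rewrite !inE od_opp0 //.
rewrite /hh /Pset cardsE add1n; congr (2 * _).+1; apply: eq_card => x; by rewrite !inE.
Qed.

Lemma pos_opp (F : finFieldType) (x : F) : (2%:R : F) != 0 -> x != 0 -> pos (- x) = ~~ pos x.
Proof.
move=> h2 nx; rewrite /pos /posi opprK.
have : rk x != rk (- x).
  apply/eqP => /rk_inj /eqP; rewrite eq_sym od_opp0 //; exact/negP.
by case: ltngtP.
Qed.

Lemma pos0 (F : finFieldType) : pos (0 : F) = false.
Proof. by rewrite /pos /posi oppr0 ltnn. Qed.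

Lemma ab_in (F : finFieldType) (x : F) : (2%:R : F) != 0 -> x != 0 -> ab x \in Pset F.
Proof.
move=> h2 nx; rewrite /ab inE; case: ifP => // /negbT.
by rewrite pos_opp.
Qed.

Lemma ab_opp (F : finFieldType) (x : F) : (2%:R : F) != 0 -> x != 0 -> ab (- x) = ab x.
Proof. by move=> h2 nx; rewrite /ab pos_opp // opprK; case: (pos x). Qed.

Lemma ix_opp (F : finFieldType) (x : F) : (2%:R : F) != 0 -> x != 0 -> ix (- x) = ix x.
Proof. by move=> h2 nx; rewrite /ix ab_opp. Qed.

Lemma ix_lt (F : finFieldType) (x : F) : (2%:R : F) != 0 -> x != 0 -> (ix x < hh F)%N.
Proof. by move=> h2 nx; rewrite /ix /hh cardE index_mem mem_enum ab_in. Qed.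

Lemma ix_inj (F : finFieldType) (x y : F) : (2%:R : F) != 0 -> x != 0 -> y != 0 ->
  pos x = pos y -> ix x = ix y -> x = y.
Proof.
move=> h2 nx ny ps e.
have : ab x = ab y.
  have hx : ab x \in enum (Pset F) by rewrite mem_enum ab_in.
  have hy : ab y \in enum (Pset F) by rewrite mem_enum ab_in.
  by rewrite -(nth_index 0 hx) -(nth_index 0 hy) -/(ix x) -/(ix y) e.
rewrite /ab ps; case: (pos y) => //; exact: oppr_inj.
Qed.

Lemma slot_lt (F : finFieldType) (x : F) : (2%:R : F) != 0 -> x != 0 -> (slot x < 2 * hh F)%N.
Proof. move=> h2 nx; have := ix_lt h2 nx; rewrite /slot; case: (pos x); lia. Qed.

Lemma slot_inj (F : finFieldType) (x y : F) : (2%:R : F) != 0 -> x != 0 -> y != 0 ->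
  slot x = slot y -> x = y.
Proof.
move=> h2 nx ny; have := ix_lt h2 nx; have := ix_lt h2 ny; rewrite /slot.
case px: (pos x); case py: (pos y) => a b e; apply: ix_inj => //; try (by rewrite px py); lia.
Qed.

Lemma hh_gt0 (F : finFieldType) : (2%:R : F) != 0 -> (0 < hh F)%N.
Proof. move=> h2; have := ix_lt h2 (oner_neq0 F); lia. Qed.

Definition Cond (F1 F2 : finFieldType) (f : F1 -> F2 -> nat) :=
  forall x1 y1 x2 y2, (x1 != x2) || (y1 != y2) ->
    (x1 + x2 == 0 -> f x1 y1 != f x2 y2) /\ (y1 + y2 == 0 -> f x1 y1 != f x2 y2).

Lemma mkL (F1 F2 : finFieldType) K (f : F1 -> F2 -> nat) :
  (forall x y, (f x y < K)%N) -> Cond f ->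
  exists L : F1 -> F2 -> 'I_K, latin_sum [set: F1] [set: F2] L.
Proof.
move=> Hb H; exists (fun x y => Ordinal (Hb x y)) => x1 y1 x2 y2 _ _ _ _ ne.
have ne' : (x1 != x2) || (y1 != y2) by move: ne; rewrite xpair_eqE negb_and.
have [A B] := H _ _ _ _ ne'.
split=> h; [move: (A h)|move: (B h)]; apply: contra => /eqP e; apply/eqP;
  exact: (congr1 val e).
Qed.

Lemma case1 (F1 F2 : finFieldType) : (2%:R : F1) == 0 -> (2%:R : F2) == 0 ->
  (#|F1| <= #|F2|)%N -> exists L : F1 -> F2 -> 'I_#|F2|, latin_sum [set: F1] [set: F2] L.
Proof.
move=> h1 h2 hF; have n0 : (0 < #|F2|)%N by have := rk_lt (0 : F2); case: #|F2|.
apply: (@mkL _ _ _ (fun x y => (rk x + rk y) %% #|F2|)%N).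
  by move=> x y; rewrite ltn_pmod.
move=> x1 y1 x2 y2 ne; split.
  move/(c2_sum h1) => e; subst x2; rewrite eqxx /= in ne.
  rewrite eqn_modDl !modn_small ?rk_lt //; apply: contra ne => /eqP/rk_inj ->; done.
move/(c2_sum h2) => e; subst y2; rewrite eqxx orbF in ne.
rewrite eqn_modDr !modn_small ?(leq_trans (rk_lt _) hF) //.
by apply: contra ne => /eqP/rk_inj ->.
Qed.

Lemma case3 (F1 F2 : finFieldType) : (2%:R : F1) == 0 -> (2%:R : F2) != 0 ->
  (#|F1| <= #|F2|)%N -> exists L : F1 -> F2 -> 'I_#|F2|, latin_sum [set: F1] [set: F2] L.
Proof.
move=> h1 h2 hF.
have Hx : forall x : F1, (rk x < 2 * hh F2)%N.
  have nm : #|F1| != (2 * hh F2).+1.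
    by apply: contraNneq (c2_even h1) => ->; rewrite /= mul2n odd_double.
  have le : (#|F1| <= 2 * hh F2)%N by rewrite -ltnS ltn_neqAle nm -(od_card h2).
  by move=> x; exact: leq_trans (rk_lt x) le.
apply: (@mkL _ _ _ (fun x y => if y == 0 then rk x else (slot y + (rk x <= slot y))%N)).
  move=> x y; rewrite (od_card h2); case: eqP => [_|/eqP ny].
    by have := Hx x; lia.
  by have := slot_lt h2 ny; case: leqP; lia.
move=> x1 y1 x2 y2 ne; split.
  move/(c2_sum h1) => e; subst x2; rewrite eqxx /= in ne.
  have Hr := Hx x1.
  case: (eqVneq y1 0) => [e1|n1]; case: (eqVneq y2 0) => [e2|n2] //=.
  - by rewrite e1 e2 eqxx in ne.
  - by case: leqP; lia.
  - by case: leqP; lia.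
  have : slot y1 != slot y2 by apply: contra ne => /eqP/(slot_inj h2 n1 n2) ->.
  by case: leqP; case: leqP; lia.
move/od_sum => e; subst y2.
case: (eqVneq y1 0) => [e1|n1].
  subst y1; rewrite oppr0 eqxx orbF in ne; rewrite /= oppr0 eqxx.
  by apply: contra ne => /eqP/rk_inj ->.
have n2 : - y1 != 0 by rewrite oppr_eq0.
rewrite /= (negbTE n2) /slot pos_opp // ix_opp //.
have := ix_lt h2 n1; have := Hx x1; have := Hx x2; have := hh_gt0 h2.
by case: (pos y1) => /=; case: leqP; case: leqP; lia.
Qed.

Lemma ix_ne (F : finFieldType) (x1 x2 : F) : (2%:R : F) != 0 -> x1 != 0 -> x2 != 0 ->
  x1 != x2 -> (pos x1 != pos x2) || (ix x1 != ix x2).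
Proof.
move=> h2 n1 n2 ne; case: (eqVneq (pos x1) (pos x2)) => [a|] //=.
case: (eqVneq (ix x1) (ix x2)) => [b|] //=.
by rewrite (ix_inj h2 n1 n2 a b) eqxx in ne.
Qed.

Lemma case2 (F1 F2 : finFieldType) : (2%:R : F1) != 0 -> (2%:R : F2) == 0 ->
  (#|F1| <= #|F2|)%N -> exists L : F1 -> F2 -> 'I_#|F2|, latin_sum [set: F1] [set: F2] L.
Proof.
move=> h1 h2 hF.
have En : #|F2| = (2 * #|F2|./2)%N.
  by rewrite -{1}(odd_double_half #|F2|) (negbTE (c2_even h2)) mul2n.
move: (#|F2|./2) En => h En.
have Hy : forall y : F2, (rk y < 2 * h)%N by move=> y; rewrite -En rk_lt.
have Hk : (hh F1 < h)%N.
  have := hF; rewrite (od_card h1) En => le.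
  lia.
pose t (y : F2) := if (rk y < h)%N then rk y else (rk y - h)%N.
pose v (x : F1) (y : F2) := let w := (t y + 1 + ix x)%N in if (w < h)%N then w else (w - h)%N.
apply: (@mkL _ _ _ (fun x y => if x == 0 then rk y else ((if pos x then 0 else h) + v x y)%N)).
  move=> x y; rewrite En /v /t; have := Hy y; case: eqP => [_|/eqP nx]; first by [].
  have := ix_lt h1 nx; case: (pos x); repeat case: ifP; lia.
move=> x1 y1 x2 y2 ne; split.
  move/od_sum => e; subst x2.
  case: (eqVneq x1 0) => [e1|n1].
    subst x1; rewrite oppr0 eqxx /= in ne; rewrite /= oppr0 eqxx.
    by apply: contra ne => /eqP/rk_inj ->.
  have n2 : - x1 != 0 by rewrite oppr_eq0.
  rewrite /= (negbTE n2) pos_opp // /v ix_opp //.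
  have := Hk; have := ix_lt h1 n1; have := Hy y1; have := Hy y2; rewrite /t.
  case: (pos x1) => /=; repeat case: ifP; lia.
move/(c2_sum h2) => e; subst y2; rewrite eqxx orbF in ne.
have := Hy y1; have := Hk; rewrite /= /v /t.
case: (eqVneq x1 0) => [e1|n1]; case: (eqVneq x2 0) => [e2|n2].
- by rewrite e1 e2 eqxx in ne.
- by have := ix_lt h1 n2; case: (pos x2); repeat case: ifP; lia.
- by have := ix_lt h1 n1; case: (pos x1); repeat case: ifP; lia.
have := ix_ne h1 n1 n2 ne; have := ix_lt h1 n1; have := ix_lt h1 n2.
by case: (pos x1); case: (pos x2); repeat case: ifP; lia.
Qed.

Lemma case4 (F1 F2 : finFieldType) : (2%:R : F1) != 0 -> (2%:R : F2) != 0 ->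
  (#|F1| <= #|F2|)%N -> (2 <= hh F2)%N ->
  exists L : F1 -> F2 -> 'I_#|F2|, latin_sum [set: F1] [set: F2] L.
Proof.
move=> h1 h2 hF hh2.
have Hk : (hh F1 <= hh F2)%N by move: hF; rewrite (od_card h1) (od_card h2); lia.
have En := od_card h2; have Hs := slot_lt h2.
apply: (@mkL _ _ _ (fun x y => if x == 0 then (if y == 0 then (2 * hh F2)%N else slot y)
  else if y == 0 then (2 * ix x + ~~ pos x)%N
  else if pos y then (~~ pos x : nat) else (hh F2 + (hh F2 + ~~ pos x) %% 2)%N)).
  move=> x y; rewrite En; case: (eqVneq x 0) => [_|nx]; case: (eqVneq y 0) => [_|ny] //=.
  - by have := Hs _ ny; lia.
  - by have := ix_lt h1 nx; case: (pos x); lia.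
  - by case: (pos x); case: (pos y); lia.
move=> x1 y1 x2 y2 ne; split.
  move/od_sum => e; subst x2.
  case: (eqVneq x1 0) => [e1|n1].
    subst x1; rewrite oppr0 eqxx /= in ne; rewrite /= oppr0 eqxx.
    case: (eqVneq y1 0) => [e1|m1]; case: (eqVneq y2 0) => [e2|m2].
    + by rewrite e1 e2 eqxx in ne.
    + by have := Hs _ m2; lia.
    + by have := Hs _ m1; lia.
    have : slot y1 != slot y2 by apply: contra ne => /eqP/(slot_inj h2 m1 m2) ->.
    done.
  have n2 : - x1 != 0 by rewrite oppr_eq0.
  rewrite /= (negbTE n2) pos_opp // ix_opp //.
  case: (eqVneq y1 0) => _; case: (eqVneq y2 0) => _;
    case: (pos x1); case: (pos y1); case: (pos y2) => /=; lia.
move/od_sum => e; subst y2.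
case: (eqVneq y1 0) => [e1|m1].
  subst y1; rewrite oppr0 eqxx orbF in ne; rewrite /= oppr0 eqxx.
  case: (eqVneq x1 0) => [e1|n1]; case: (eqVneq x2 0) => [e2|n2].
  + by rewrite e1 e2 eqxx in ne.
  + by have := ix_lt h1 n2; case: (pos x2); lia.
  + by have := ix_lt h1 n1; case: (pos x1); lia.
  have := ix_ne h1 n1 n2 ne.
  by case: (pos x1); case: (pos x2) => /=; lia.
have m2 : - y1 != 0 by rewrite oppr_eq0.
have := Hs _ m1; have := Hs _ m2.
rewrite /= (negbTE m2) /slot pos_opp // ix_opp //.
have := ix_lt h2 m1.
by case: (x1 == 0); case: (x2 == 0); case: (pos y1); case: (pos x1); case: (pos x2) => /=; lia.
Qed.

Lemma case5 (F1 F2 : finFieldType) : (2%:R : F1) != 0 -> (2%:R : F2) != 0 ->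
  #|F1| = 3%N -> #|F2| = 3%N ->
  exists L : F1 -> F2 -> 'I_4, latin_sum [set: F1] [set: F2] L.
Proof.
move=> h1 h2 e1 e2.
have k1 : hh F1 = 1%N by move: (od_card h1); rewrite e1; lia.
have k2 : hh F2 = 1%N by move: (od_card h2); rewrite e2; lia.
have S1 : forall x y : F1, x != 0 -> y != 0 -> x != y -> pos x != pos y.
  move=> x y nx ny nxy; have := ix_ne h1 nx ny nxy; have := ix_lt h1 nx;
  have := ix_lt h1 ny; rewrite k1; lia.
have S2 : forall x y : F2, x != 0 -> y != 0 -> x != y -> pos x != pos y.
  move=> x y nx ny nxy; have := ix_ne h2 nx ny nxy; have := ix_lt h2 nx;
  have := ix_lt h2 ny; rewrite k2; lia.
apply: (@mkL _ _ _ (fun (x : F1) (y : F2) =>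
  if x == 0 then (if y == 0 then 2%N else if pos y then 0%N else 1%N)
  else if pos x then (if y == 0 then 0%N else if pos y then 0%N else 1%N)
  else (if y == 0 then 3%N else if pos y then 2%N else 3%N))).
  by move=> x y; repeat case: ifP.
move=> x1 y1 x2 y2 ne; split.
  move/od_sum => e; subst x2.
  case: (eqVneq x1 0) => [e1'|n1].
    subst x1; rewrite oppr0 eqxx /= in ne; rewrite /= oppr0 eqxx.
    case: (eqVneq y1 0) => [f1|m1]; case: (eqVneq y2 0) => [f2|m2].
    + by rewrite f1 f2 eqxx in ne.
    + by case: (pos y2).
    + by case: (pos y1).
    have := S2 _ _ m1 m2 ne.
    by case: (pos y1); case: (pos y2).
  have n2 : - x1 != 0 by rewrite oppr_eq0.
  rewrite /= (negbTE n2) pos_opp //.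
  by case: (y1 == 0); case: (y2 == 0); case: (pos x1); case: (pos y1); case: (pos y2).
move/od_sum => e; subst y2.
case: (eqVneq y1 0) => [f1|m1].
  subst y1; rewrite oppr0 eqxx orbF in ne; rewrite /= oppr0 eqxx.
  case: (eqVneq x1 0) => [f1|n1]; case: (eqVneq x2 0) => [f2|n2].
  + by rewrite f1 f2 eqxx in ne.
  + by case: (pos x2).
  + by case: (pos x1).
  have := S1 _ _ n1 n2 ne.
  by case: (pos x1); case: (pos x2).
have m2 : - y1 != 0 by rewrite oppr_eq0.
rewrite /= (negbTE m2) pos_opp //.
by case: (x1 == 0); case: (x2 == 0); case: (pos y1); case: (pos x1); case: (pos x2).
Qed.

Local Close Scope ring_scope.

Theorem lemma11 (F1 F2 : finFieldType) (hF : #|F1| <= #|F2|) :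
  exists L : F1 -> F2 -> 'I_(if (#|F1| == 3) && (#|F2| == 3) then 4 else #|F2|),
    latin_sum [set: F1] [set: F2] L.
Proof.
case E: ((#|F1| == 3) && (#|F2| == 3)).
  move/andP: E => [/eqP e1 /eqP e2].
  have o1 : ((2%:R : F1) != 0)%R by apply/negP => /c2_even; rewrite e1.
  have o2 : ((2%:R : F2) != 0)%R by apply/negP => /c2_even; rewrite e2.
  exact: case5.
case: (boolP ((2%:R : F1) == 0)%R) => a; case: (boolP ((2%:R : F2) == 0)%R) => b.
- exact: case1.
- exact: case3.
- exact: case2.
apply: case4 => //.
have := hh_gt0 a; move: E hF; rewrite (od_card a) (od_card b); lia.
Qed.
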